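(* Let $r_1,r_2>0$ and let $\gamma_1,\gamma_2$ be two disjoint geodesics in $\mathbb{H}^2$, and let $\gamma$ be the set of points $q\in\mathbb{H}^2$ with $r_1\sinh d(q,\gamma_1)=r_2\sinh d(q,\gamma_2)$ (this set is a geodesic). Suppose $\mathbb{H}^2$ is isometrically identified with the Poincaré unit disk $\mathbb{D}$ so that $\gamma$ is a diameter of $\mathbb{D}$. Then the Euclidean circles containing $\gamma_1$ and $\gamma_2$ have radii in ratio $r_1:r_2$, and the inversive distance between these two Euclidean circles equals $\cosh d_{\mathbb{H}}(\gamma_1,\gamma_2)$.
   Context: The inversive distance of two Euclidean circles with radii $\rho_1,\rho_2$ whose centers are at distance $l$ is $(l^2-\rho_1^2-\rho_2^2)/(2\rho_1\rho_2)$. *)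

(* Defs.v *)
From HB Require Import structures.
From mathcomp Require Import all_boot all_order all_algebra.
From mathcomp Require Import all_classical all_reals all_analysis.
Set Implicit Arguments. Unset Strict Implicit. Unset Printing Implicit Defensive.
Import Order.TTheory GRing.Theory Num.Theory.
Local Open Scope classical_set_scope.
Local Open Scope ring_scope.

Section Defs.
Variable R : realType.
Notation pt := (R * R)%type.

Definition cosh (x : R) : R := (expR x + expR (- x)) / 2.
Definition sinh (x : R) : R := (expR x - expR (- x)) / 2.
Definition arcosh (x : R) : R := ln (x + Num.sqrt (x ^+ 2 - 1)).

Definition sqn (p : pt) : R := p.1 ^+ 2 + p.2 ^+ 2.
Definition sqdist (p q : pt) : R := (p.1 - q.1) ^+ 2 + (p.2 - q.2) ^+ 2.

Definition disk : set pt := [set p | sqn p < 1].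

Definition dH (p q : pt) : R :=
  arcosh (1 + 2 * sqdist p q / ((1 - sqn p) * (1 - sqn q))).

Definition dH_pt_set (q : pt) (A : set pt) : R := inf [set dH q p | p in A].
Definition dH_set (A B : set pt) : R :=
  inf [set dH pq.1 pq.2 | pq in A `*` B].

Definition diameter (G : set pt) : Prop :=
  exists u : pt, u != (0, 0) /\
    G = [set p | disk p /\ p.1 * u.2 - p.2 * u.1 = 0].

(* complete geodesic lines of the Poincare disk: diameters and the
   intersections with the disk of Euclidean circles orthogonal to the unit
   circle (center c, radius rho with |c|^2 = 1 + rho^2) *)
Definition geodesic (G : set pt) : Prop :=
  diameter G \/
  exists (c : pt) (rho : R), 0 < rho /\ sqn c = 1 + rho ^+ 2 /\
    G = [set p | disk p /\ sqdist p c = rho ^+ 2].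

Definition circle (c : pt) (rho : R) : set pt := [set p | sqdist p c = rho ^+ 2].

Definition inversive_distance (c1 : pt) (rho1 : R) (c2 : pt) (rho2 : R) : R :=
  (sqdist c1 c2 - rho1 ^+ 2 - rho2 ^+ 2) / (2 * rho1 * rho2).
End Defs.

(* Main.v *)
Require Import Defs.
From HB Require Import structures.
From mathcomp Require Import all_boot all_order all_algebra.
From mathcomp Require Import all_classical all_reals all_analysis.
From mathcomp.algebra_tactics Require Import ring lra.
Import Order.TTheory GRing.Theory Num.Theory.
Local Open Scope classical_set_scope.
Local Open Scope ring_scope.

Section Hyp.
Variable R : realType.
Set Implicit Arguments. Unset Strict Implicit.

Lemma zpos (y : R) : 1 <= y -> 1 <= y + Num.sqrt (y ^+ 2 - 1).
Proof. move=> hy; have := sqrtr_ge0 (y ^+ 2 - 1); lra. Qed.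

Lemma zinv (y : R) : 1 <= y ->
  (y + Num.sqrt (y ^+ 2 - 1))^-1 = y - Num.sqrt (y ^+ 2 - 1).
Proof.
move=> hy; have hz := zpos hy.
have h2 : 0 <= y ^+ 2 - 1 by nra.
have hs := sqr_sqrtr h2.
apply: (@mulfI _ (y + Num.sqrt (y ^+ 2 - 1))); first by apply/eqP => h; lra.
rewrite mulfV; last by apply/eqP => h; lra.
have -> : (y + Num.sqrt (y ^+ 2 - 1)) * (y - Num.sqrt (y ^+ 2 - 1)) = y ^+ 2 - Num.sqrt (y ^+ 2 - 1) ^+ 2 by ring.
rewrite hs; ring.
Qed.

Lemma arcosh_ge0 (y : R) : 1 <= y -> 0 <= arcosh y.
Proof. move=> hy; rewrite /arcosh; apply: ln_ge0; exact: zpos. Qed.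

Lemma exp_arcosh (y : R) : 1 <= y -> expR (arcosh y) = y + Num.sqrt (y ^+ 2 - 1).
Proof. move=> hy; rewrite /arcosh lnK // posrE; have := zpos hy; lra. Qed.

Lemma expN_arcosh (y : R) : 1 <= y -> expR (- arcosh y) = y - Num.sqrt (y ^+ 2 - 1).
Proof. move=> hy; rewrite expRN exp_arcosh // zinv //. Qed.

Lemma cosh_arcosh (y : R) : 1 <= y -> cosh (arcosh y) = y.
Proof. move=> hy; rewrite /cosh exp_arcosh // expN_arcosh //; by field. Qed.

Lemma sinh_arcosh (y : R) : 1 <= y -> sinh (arcosh y) = Num.sqrt (y ^+ 2 - 1).
Proof. move=> hy; rewrite /sinh exp_arcosh // expN_arcosh //; by field. Qed.

Lemma arcosh_le (x y : R) : 1 <= x -> x <= y -> arcosh x <= arcosh y.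
Proof.
move=> hx hxy; have := zpos hx; have := zpos (le_trans hx hxy) => h1 h2.
rewrite /arcosh ler_ln ?posrE; [|lra|lra].
have : Num.sqrt (x ^+ 2 - 1) <= Num.sqrt (y ^+ 2 - 1).
  rewrite ler_sqrt; nra.
lra.
Qed.

Lemma arcosh_up (x y e : R) : 1 <= x -> x <= y -> 0 < e ->
  (y + Num.sqrt (y ^+ 2 - 1)) <= (x + Num.sqrt (x ^+ 2 - 1)) + e ->
  arcosh y <= arcosh x + e.
Proof.
move=> hx hxy he hz; rewrite -[arcosh y]expRK -[arcosh x + e]expRK.
rewrite ler_ln ?posrE ?expR_gt0 // expRD exp_arcosh ?exp_arcosh //; last lra.
have h1 := expR_ge1Dx e.
have hz1 := zpos hx.
nra.
Qed.



Notation pt := (R * R)%type.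
Definition vec := (R * R * R)%type.
Implicit Types (p q : pt) (U V W X Y N Z u v w : vec).
Definition mdot (u v : vec) : R := - u.1.1 * v.1.1 + u.1.2 * v.1.2 + u.2 * v.2.
Definition Xp (p : pt) : vec :=
  ((1 + sqn p) / (1 - sqn p), 2 * p.1 / (1 - sqn p), 2 * p.2 / (1 - sqn p)).
Definition Pinv (Z : vec) : pt := (Z.1.2 / (1 + Z.1.1), Z.2 / (1 + Z.1.1)).
Definition vlin (a : R) (U : vec) (b : R) (V : vec) : vec :=
  (a * U.1.1 + b * V.1.1, a * U.1.2 + b * V.1.2, a * U.2 + b * V.2).

Lemma mdotC U V : mdot U V = mdot V U.
Proof. rewrite /mdot; ring. Qed.

Lemma mdot_vlin a U b V W : mdot (vlin a U b V) W = a * mdot U W + b * mdot V W.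
Proof. rewrite /mdot /vlin /=; ring. Qed.

Lemma disk_pos p : disk p -> 0 < 1 - sqn p.
Proof. rewrite /disk /=; lra. Qed.

Lemma sqn_ge0 p : 0 <= sqn p.
Proof. rewrite /sqn; nra. Qed.

Lemma cosh_dH p q : disk p -> disk q ->
  1 + 2 * sqdist p q / ((1 - sqn p) * (1 - sqn q)) = - mdot (Xp p) (Xp q).
Proof.
move=> /disk_pos hp /disk_pos hq.
rewrite /mdot /Xp /sqdist /=; move: hp hq; rewrite /sqn => hp hq.
field; apply/andP; split; apply/eqP; lra.
Qed.

Lemma dH_mdot p q : disk p -> disk q -> dH p q = arcosh (- mdot (Xp p) (Xp q)).
Proof. by move=> hp hq; rewrite /dH cosh_dH. Qed.

Lemma mdot_ge1 p q : disk p -> disk q -> 1 <= - mdot (Xp p) (Xp q).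
Proof.
move=> hp hq; rewrite -cosh_dH //.
have h1 := disk_pos hp; have h2 := disk_pos hq.
have : 0 <= 2 * sqdist p q / ((1 - sqn p) * (1 - sqn q)).
  apply: divr_ge0; last by apply: mulr_ge0; lra.
  by rewrite /sqdist mulr_ge0 // addr_ge0 // sqr_ge0.
lra.
Qed.

Lemma Xp_unit p : disk p -> mdot (Xp p) (Xp p) = -1.
Proof.
move=> /disk_pos hp; rewrite /mdot /Xp /=; move: hp; rewrite /sqn => hp.
field; apply/eqP; lra.
Qed.

Lemma Xp0_gt0 p : disk p -> 0 < (Xp p).1.1.
Proof.
move=> hp /=; apply: divr_gt0; last exact: disk_pos.
have := sqn_ge0 p; lra.
Qed.

Lemma Pinv_disk Z : mdot Z Z = -1 -> 0 < Z.1.1 -> disk (Pinv Z).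
Proof.
move: Z => [[z0 z1] z2]; rewrite /mdot /Pinv /disk /sqn /= => hz h0.
have h1 : 0 < 1 + z0 by lra.
rewrite !expr_div_n -mulrDl ltr_pdivrMr ?exprn_gt0 // mul1r; nra.
Qed.

Lemma Xp_Pinv Z : mdot Z Z = -1 -> 0 < Z.1.1 -> Xp (Pinv Z) = Z.
Proof.
move: Z => [[z0 z1] z2]; rewrite /mdot /Pinv /Xp /sqn /= => hz h0.
have h1 : 0 < 1 + z0 by lra.
have e : 1 - ((z1 / (1 + z0)) ^+ 2 + (z2 / (1 + z0)) ^+ 2) = 2 / (1 + z0).
  have hz' : z1 ^+ 2 + z2 ^+ 2 = z0 ^+ 2 - 1 by lra.
  rewrite !expr_div_n -mulrDl hz'.
  field; apply/eqP; lra.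
have e2 : 1 + ((z1 / (1 + z0)) ^+ 2 + (z2 / (1 + z0)) ^+ 2) = 2 - 2 / (1 + z0) by lra.
rewrite e e2; congr (_, _, _); field; try (apply/andP; split); apply/eqP; lra.
Qed.


Lemma future (U V : vec) : mdot U U = -1 -> mdot V V = -1 ->
  0 < U.1.1 -> 0 < V.1.1 -> mdot U V <= -1.
Proof.
move: U V => [[u0 u1] u2] [[v0 v1] v2]; rewrite /mdot /= => hu hv h0 h1.
have hA : 0 < u0 * v0 by apply: mulr_gt0.
have hsq : (u0 * v0) ^+ 2 - (1 + u1 * v1 + u2 * v2) ^+ 2 =
   (u1 - v1) ^+ 2 + (u2 - v2) ^+ 2 + (u1 * v2 - u2 * v1) ^+ 2.
  have -> : (u0 * v0) ^+ 2 = u0 ^+ 2 * v0 ^+ 2 by ring.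
  have -> : u0 ^+ 2 = 1 + u1 ^+ 2 + u2 ^+ 2 by lra.
  have -> : v0 ^+ 2 = 1 + v1 ^+ 2 + v2 ^+ 2 by lra.
  ring.
have : 1 + u1 * v1 + u2 * v2 <= u0 * v0.
  case: (lerP (1 + u1 * v1 + u2 * v2) 0) => hB; first lra.
  rewrite -(ler_pXn2r (n:=2)) // ?nnegrE; try lra.
  have : 0 <= (u1 - v1) ^+ 2 + (u2 - v2) ^+ 2 + (u1 * v2 - u2 * v1) ^+ 2.
    by rewrite !addr_ge0 // sqr_ge0.
  lra.
lra.
Qed.

Lemma gram (u v w : vec) :
  mdot u u * (mdot v v * mdot w w - mdot v w ^+ 2) - mdot u v * (mdot u v * mdot w w - mdot v w * mdot u w)
  + mdot u w * (mdot u v * mdot v w - mdot v v * mdot u w) =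
  - (u.1.1 * (v.1.2 * w.2 - v.2 * w.1.2) - u.1.2 * (v.1.1 * w.2 - v.2 * w.1.1)
     + u.2 * (v.1.1 * w.1.2 - v.1.2 * w.1.1)) ^+ 2.
Proof. rewrite /mdot /=; ring. Qed.

Lemma gram_le (u v w : vec) :
  mdot u u * (mdot v v * mdot w w - mdot v w ^+ 2) - mdot u v * (mdot u v * mdot w w - mdot v w * mdot u w)
  + mdot u w * (mdot u v * mdot v w - mdot v v * mdot u w) <= 0.
Proof. by rewrite gram oppr_le0 sqr_ge0. Qed.

Lemma gramXY (X Y N : vec) : mdot X X = -1 -> mdot Y Y = -1 -> mdot X N = 0 ->
  0 < mdot N N -> 1 + (mdot Y N) ^+ 2 / mdot N N <= (mdot X Y) ^+ 2.
Proof.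
move=> hX hY hXN hN.
have := gram_le X N Y; rewrite /= hX hY hXN (mdotC N Y) => e.
have : 0 <= (mdot X Y) ^+ 2 * mdot N N - mdot N N - (mdot Y N) ^+ 2.
  move: e; nra.
move=> h; rewrite -(ler_pM2r hN) mulrDl mul1r divfK; [lra|].
by apply/eqP; lra.
Qed.

Lemma gramNN (Y N1 N2 : vec) : mdot Y Y = -1 -> mdot Y N2 = 0 ->
  0 < mdot N2 N2 ->
  (mdot N1 N2) ^+ 2 - mdot N1 N1 * mdot N2 N2 <= (mdot Y N1) ^+ 2 * mdot N2 N2.
Proof.
move=> hY hYN hN.
have := gram_le N2 N1 Y; rewrite /= hY (mdotC N2 Y) hYN (mdotC N2 N1) (mdotC N1 Y) => e.
nra.
Qed.



Lemma mdot_vlinr a U b V W : mdot W (vlin a U b V) = a * mdot W U + b * mdot W V.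
Proof. rewrite /mdot /vlin /=; ring. Qed.

Lemma s_facts (b nu : R) : 0 < nu ->
  Num.sqrt (1 + b ^+ 2 / nu) ^+ 2 = 1 + b ^+ 2 / nu /\ 1 <= Num.sqrt (1 + b ^+ 2 / nu).
Proof.
move=> hN.
have h0 : 0 <= b ^+ 2 / nu by apply: divr_ge0; [apply: sqr_ge0| apply: ltW].
have h2 : Num.sqrt (1 + b ^+ 2 / nu) ^+ 2 = 1 + b ^+ 2 / nu by apply: sqr_sqrtr; lra.
split => //.
have := sqrtr_ge0 (1 + b ^+ 2 / nu); nra.
Qed.

Lemma foot N q : 0 < mdot N N -> disk q ->
  exists p, disk p /\ mdot (Xp p) N = 0 /\
    - mdot (Xp q) (Xp p) = Num.sqrt (1 + (mdot (Xp q) N) ^+ 2 / mdot N N).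
Proof.
move=> hN hq.
have hQ := Xp_unit hq; have hQ0 := Xp0_gt0 hq.
move: hQ hQ0; set Q := Xp q => hQ hQ0.
set b := mdot Q N; set nu := mdot N N in hN *.
have [hs2 hs1] := s_facts b hN.
move: hs2 hs1; set s := Num.sqrt _ => hs2 hs1.
have hs0 : s != 0 by apply/eqP => hh; lra.
have hnu : nu != 0 by apply/eqP => hh; lra.
set Z := vlin s^-1 Q (- (b / nu / s)) N.
have hNQ : mdot N Q = b by rewrite mdotC.
have hZZ : mdot Z Z = -1.
  rewrite /Z mdot_vlin !mdot_vlinr hQ hNQ -/b -/nu.
  transitivity (- (1 + b ^+ 2 / nu) / s ^+ 2); first by field; apply/andP.
  by rewrite -hs2 mulNr divff // expf_neq0.
have hZN : mdot Z N = 0.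
  by rewrite /Z mdot_vlin -/b -/nu; field; apply/andP.
have hQZ : mdot Q Z = - s.
  rewrite /Z mdot_vlinr hQ -/b.
  transitivity (- (1 + b ^+ 2 / nu) / s); first by field; apply/andP.
  by rewrite -hs2; field.
clearbody Z.
have hZ0 : 0 < Z.1.1.
  rewrite ltNge; apply/negP => hle.
  have hZ1 : Z.1.1 <= -1.
    move: hZZ hle; rewrite /mdot.
    have := sqr_ge0 Z.1.2; have := sqr_ge0 Z.2; rewrite !expr2; nra.
  have hV : mdot (vlin (-1) Z 0 Z) (vlin (-1) Z 0 Z) = -1.
    by rewrite mdot_vlin !mdot_vlinr hZZ; ring.
  have hV0 : 0 < (vlin (-1) Z 0 Z).1.1 by rewrite /=; lra.
  have := future hQ hV hQ0 hV0; rewrite mdot_vlinr hQZ; lra.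
exists (Pinv Z); rewrite Xp_Pinv //; split; first exact: Pinv_disk.
by split => //; rewrite hQZ opprK.
Qed.

Lemma lowC N p q : 0 < mdot N N -> disk p -> mdot (Xp p) N = 0 -> disk q ->
  Num.sqrt (1 + (mdot (Xp q) N) ^+ 2 / mdot N N) <= - mdot (Xp q) (Xp p).
Proof.
move=> hN hp hpN hq.
have h := gramXY (Xp_unit hp) (Xp_unit hq) hpN hN.
have h1 := mdot_ge1 hq hp.
rewrite -[X in _ <= X]ger0_norm; last lra.
rewrite -sqrtr_sqr ler_sqrt; last exact: sqr_ge0.
by rewrite sqrrN (mdotC (Xp q) (Xp p)).
Qed.

Lemma inf_min (S : set R) m : S m -> (forall x, S x -> m <= x) -> inf S = m.
Proof.
move=> hm hlb; apply/eqP; rewrite eq_le; apply/andP; split.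
  by apply: (ge_inf (E := S)); [exists m | ].
by apply: lb_le_inf; [exists m|].
Qed.

Lemma dist_geod G N q : 0 < mdot N N -> G = [set p | disk p /\ mdot (Xp p) N = 0] ->
  disk q ->
  dH_pt_set q G = arcosh (Num.sqrt (1 + (mdot (Xp q) N) ^+ 2 / mdot N N)).
Proof.
move=> hN -> hq; rewrite /dH_pt_set.
have [_ hs1] := s_facts (mdot (Xp q) N) hN.
have [p [hp [hpN e]]] := foot hN hq.
apply: inf_min.
  by exists p => //; rewrite dH_mdot // e.
move=> x [p' [hp' hp'N] <-]; rewrite dH_mdot //.
apply: arcosh_le => //; exact: lowC.
Qed.

Lemma sinh_dist G N q : 0 < mdot N N -> G = [set p | disk p /\ mdot (Xp p) N = 0] ->
  disk q ->
  sinh (dH_pt_set q G) = Num.sqrt ((mdot (Xp q) N) ^+ 2 / mdot N N).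
Proof.
move=> hN hG hq; rewrite (dist_geod hN hG hq).
have [hs2 hs1] := s_facts (mdot (Xp q) N) hN.
by rewrite sinh_arcosh // hs2 addrAC subrr add0r.
Qed.



Lemma sqrt_add (a b : R) : 0 <= a -> 0 <= b -> Num.sqrt (a + b) <= Num.sqrt a + Num.sqrt b.
Proof.
move=> ha hb.
have h1 := sqrtr_ge0 a; have h2 := sqrtr_ge0 b.
rewrite -[X in _ <= X]ger0_norm; last lra.
rewrite -sqrtr_sqr ler_sqrt; last exact: sqr_ge0.
rewrite sqrrD !sqr_sqrtr //.
have : 0 <= Num.sqrt a * Num.sqrt b by apply: mulr_ge0.
lra.
Qed.

Lemma dset_arcosh (g1 g2 : set pt) N1 N2 (K : R) :
  0 < mdot N1 N1 -> 0 < mdot N2 N2 ->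
  g1 = [set p | disk p /\ mdot (Xp p) N1 = 0] ->
  g2 = [set p | disk p /\ mdot (Xp p) N2 = 0] ->
  1 <= K -> K ^+ 2 * (mdot N1 N1 * mdot N2 N2) = (mdot N1 N2) ^+ 2 ->
  (forall d, 0 < d -> exists q, disk q /\ mdot (Xp q) N2 = 0 /\
        1 + (mdot (Xp q) N1) ^+ 2 / mdot N1 N1 <= K ^+ 2 + d) ->
  dH_set g1 g2 = arcosh K.
Proof.
move=> h1 h2 hg1 hg2 hK hKN happ.
have lb : forall x, [set dH pq.1 pq.2 | pq in g1 `*` g2] x -> arcosh K <= x.
  move=> x [[p q] [/= hp hq] <-] /=.
  move: hp hq; rewrite hg1 hg2 => -[hp hpN] [hq hqN].
  rewrite dH_mdot //; apply: arcosh_le => //.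
  have hl := lowC h1 hp hpN hq; rewrite (mdotC (Xp p) (Xp q)).
  apply: (le_trans _ hl).
  have hg := gramNN N1 (Xp_unit hq) hqN h2.
  set b := mdot (Xp q) N1 in hg *.
  have hb : K ^+ 2 - 1 <= b ^+ 2 / mdot N1 N1.
    rewrite ler_pdivlMr // -(ler_pM2r h2).
    move: hg; rewrite -hKN; nra.
  have hK2 : 1 <= K ^+ 2 by rewrite expr2; nra.
  rewrite -[X in X <= _]ger0_norm; last lra.
  rewrite -sqrtr_sqr ler_sqrt; lra.
have hne : [set dH pq.1 pq.2 | pq in g1 `*` g2] !=set0.
  have [q [hq [hqN _]]] := happ 1 ltr01.
  have [p [hp [hpN _]]] := foot h1 hq.
  exists (dH p q); exists (p, q) => //; split; rewrite /= ?hg1 ?hg2 //.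
apply/eqP; rewrite eq_le; apply/andP; split; last first.
  by apply: lb_le_inf.
apply/ler_addgt0Pr => e he.
set d := e / (2 + e).
have hd0 : 0 < d by apply: divr_gt0; lra.
have hd1 : d <= 1 by rewrite ler_pdivrMr; lra.
have hde : d ^+ 2 + d <= e.
  have : d * (2 + e) = e by rewrite /d divfK //; apply/eqP => hh; lra.
  nra.
have [q [hq [hqN hqb]]] := happ (d ^+ 2) (exprn_gt0 _ hd0).
have [p [hp [hpN hpe]]] := foot h1 hq.
apply: (le_trans (y := dH p q)).
  apply: (ge_inf (E := [set dH pq.1 pq.2 | pq in g1 `*` g2])).
    by exists (arcosh K) => x hx; apply: lb.
  by exists (p, q) => //; split; rewrite /= ?hg1 ?hg2.
rewrite dH_mdot // mdotC hpe.
have [_ hs1] := s_facts (mdot (Xp q) N1) h1.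
set y := Num.sqrt (K ^+ 2 + d ^+ 2).
have hy2 : y ^+ 2 = K ^+ 2 + d ^+ 2 by rewrite sqr_sqrtr //; nra.
have hy0 : 0 <= y by apply: sqrtr_ge0.
have hKy : K <= y.
  rewrite -(ler_pXn2r (n := 2)) ?nnegrE //; [|lra].
  rewrite hy2; have := sqr_ge0 d; lra.
apply: (le_trans (y := arcosh y)).
  apply: arcosh_le => //.
  rewrite ler_sqrt //; nra.
apply: arcosh_up => //.
have hyK : y - K <= d ^+ 2 by nra.
have : Num.sqrt (y ^+ 2 - 1) <= Num.sqrt (K ^+ 2 - 1) + d.
  rewrite hy2 (_ : K ^+ 2 + d ^+ 2 - 1 = (K ^+ 2 - 1) + d ^+ 2); last ring.
  apply: (le_trans (sqrt_add _ _)); [nra| apply: sqr_ge0|].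
  by rewrite sqrtr_sqr ger0_norm //; lra.
lra.
Qed.



Lemma choose_mu (a b P e : R) : 0 < P -> 0 < e -> 0 <= a * b ->
  exists mu, 0 < mu /\ (mu * a - P * b / mu) ^+ 2 <= e.
Proof.
move=> hP he hab.
have [a0|an0] := eqVneq a 0.
  set mu := (P * b) ^+ 2 / e + 1.
  have hq : 0 <= (P * b) ^+ 2 / e by apply: divr_ge0; [apply: sqr_ge0|lra].
  have hmu : 1 <= mu by rewrite /mu; lra.
  exists mu; split; first lra.
  rewrite a0 mulr0 sub0r sqrrN expr_div_n ler_pdivrMr; last by apply: exprn_gt0; lra.
  have : (P * b) ^+ 2 <= e * mu.
    have e1 : e * ((P * b) ^+ 2 / e) = (P * b) ^+ 2.
      by field; apply/eqP => hh; lra.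
    rewrite /mu mulrDr e1; lra.
  rewrite expr2; nra.
have [b0|bn0] := eqVneq b 0.
  have ha2 : 0 < a ^+ 2 by rewrite exprn_even_gt0 //.
  set mu := e / (a ^+ 2 + e).
  have hmu0 : 0 < mu by apply: divr_gt0; lra.
  have hmu1 : mu <= 1 by rewrite ler_pdivrMr; lra.
  have hmua : mu * a ^+ 2 <= e.
    rewrite /mu mulrAC ler_pdivrMr; last lra.
    nra.
  exists mu; split => //.
  rewrite b0 mulr0 mul0r subr0 exprMn.
  have : mu ^+ 2 * a ^+ 2 <= mu * a ^+ 2 by rewrite expr2 ler_pM2r //; nra.
  lra.
have hab' : 0 < a * b.
  rewrite lt_def hab andbT mulf_neq0 //.
have hq : 0 < P * b / a.
  have -> : P * b / a = P * (a * b) / (a ^+ 2) by field.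
  by apply: divr_gt0; [apply: mulr_gt0| rewrite exprn_even_gt0].
set mu := Num.sqrt (P * b / a).
have hmu : 0 < mu by rewrite sqrtr_gt0.
have hmu2 : mu ^+ 2 = P * b / a by rewrite sqr_sqrtr //; lra.
exists mu; split => //.
have -> : mu * a - P * b / mu = (mu ^+ 2 - P * b / a) * a / mu.
  by field; apply/andP; split => //; apply/eqP => hh; lra.
by rewrite hmu2 subrr !mul0r expr0n /=; lra.
Qed.

Definition lp (c : pt) (rho : R) : vec :=
  (1, (c.1 - rho * c.2) / sqn c, (c.2 + rho * c.1) / sqn c).
Definition lm (c : pt) (rho : R) : vec :=
  (1, (c.1 + rho * c.2) / sqn c, (c.2 - rho * c.1) / sqn c).
Definition Nc (c : pt) : vec := (1, c.1, c.2).

Section Null.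
Variables (c : pt) (rho : R).
Hypotheses (hr : 0 < rho) (hc : sqn c = 1 + rho ^+ 2).
Let hc0 : sqn c != 0. Proof. apply/eqP; rewrite hc => hh; have := sqr_ge0 rho; lra. Qed.
Let hc0' : c.1 ^+ 2 + c.2 ^+ 2 != 0. Proof. exact: hc0. Qed.

Lemma lp_null : mdot (lp c rho) (lp c rho) = 0.
Proof.
transitivity (-1 + (1 + rho ^+ 2) / sqn c).
  by rewrite /mdot /lp /=; move: hc0'; rewrite /sqn => h0; field.
by rewrite hc divff ?addNr // -hc.
Qed.

Lemma lm_null : mdot (lm c rho) (lm c rho) = 0.
Proof.
transitivity (-1 + (1 + rho ^+ 2) / sqn c).
  by rewrite /mdot /lm /=; move: hc0'; rewrite /sqn => h0; field.
by rewrite hc divff ?addNr // -hc.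
Qed.

Lemma lpm : mdot (lp c rho) (lm c rho) = - 2 * rho ^+ 2 / sqn c.
Proof.
transitivity (-1 + (1 - rho ^+ 2) / sqn c).
  by rewrite /mdot /lp /lm /=; move: hc0'; rewrite /sqn => h0; field.
apply: (@mulIf _ (sqn c)) => //.
rewrite mulrDl !divfK // hc; ring.
Qed.

Lemma lpN : mdot (lp c rho) (Nc c) = 0.
Proof.
by rewrite /mdot /lp /Nc /=; move: hc0'; rewrite /sqn => h0; field.
Qed.

Lemma lmN : mdot (lm c rho) (Nc c) = 0.
Proof.
by rewrite /mdot /lm /Nc /=; move: hc0'; rewrite /sqn => h0; field.
Qed.

End Null.



Lemma approx (c1 c2 : pt) (rho1 rho2 K d : R) : 0 < rho1 -> 0 < rho2 ->
  sqn c1 = 1 + rho1 ^+ 2 -> sqn c2 = 1 + rho2 ^+ 2 ->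
  K = (1 - (c1.1 * c2.1 + c1.2 * c2.2)) / (rho1 * rho2) -> 1 <= K -> 0 < d ->
  exists q, disk q /\ mdot (Xp q) (Nc c2) = 0 /\
    1 + (mdot (Xp q) (Nc c1)) ^+ 2 / mdot (Nc c1) (Nc c1) <= K ^+ 2 + d.
Proof.
move=> h1 h2 hc1 hc2 hK hK1 hd.
have hN1 : mdot (Nc c1) (Nc c1) = rho1 ^+ 2.
  by move: hc1; rewrite /mdot /Nc /sqn /= !expr2 => hc1; lra.
have hs2 : 0 < sqn c2 by rewrite hc2; have := sqr_ge0 rho2; lra.
have hsc2 : sqn c2 != 0 by apply/eqP => hh; lra.
have hs2' : c2.1 ^+ 2 + c2.2 ^+ 2 != 0 by apply/eqP => hh; move: hs2; rewrite /sqn hh; lra.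
have hr1 : rho1 != 0 by apply/eqP => hh; lra.
have hr2 : rho2 != 0 by apply/eqP => hh; lra.
set P := sqn c2 / (4 * rho2 ^+ 2).
have hP : 0 < P by apply: divr_gt0 => //; apply: mulr_gt0; [lra| apply: exprn_gt0].
set al := mdot (lp c2 rho2) (Nc c1).
set be := mdot (lm c2 rho2) (Nc c1).
have hid : 4 * al * be * P = (K ^+ 2 - 1) * rho1 ^+ 2.
  set t := c1.1 * c2.1 + c1.2 * c2.2.
  transitivity (((t - sqn c2) ^+ 2 - rho2 ^+ 2 * (sqn c1 * sqn c2 - t ^+ 2)) / (sqn c2 * rho2 ^+ 2)).
    rewrite /al /be /P /lp /lm /mdot /Nc /t /=; move: hs2'; rewrite /sqn => hs.
    by field; apply/andP; split.
  have hsc : 1 + rho2 ^+ 2 != 0 by rewrite -hc2; apply/eqP => hh; lra.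
  rewrite hc1 hc2 hK /t; field; by rewrite ?hr1 ?hr2 ?hsc.
have hab : 0 <= al * be.
  have hK2 : 0 <= (K ^+ 2 - 1) * rho1 ^+ 2.
    apply: mulr_ge0; last exact: sqr_ge0.
    rewrite expr2; nra.
  have : 0 <= 4 * al * be * P by rewrite hid.
  have -> : 4 * al * be * P = (al * be) * (4 * P) by ring.
  move=> hh; nra.
have hd1 : 0 < d * rho1 ^+ 2 by apply: mulr_gt0 => //; apply: exprn_gt0.
have [mu [hmu hmue]] := choose_mu hP hd1 hab.
have hmu0 : mu != 0 by apply/eqP => hh; lra.
set Y := vlin mu (lp c2 rho2) (P / mu) (lm c2 rho2).
have hYY : mdot Y Y = -1.
  rewrite /Y mdot_vlin !mdot_vlinr (lp_null hc2) (lm_null hc2) (mdotC (lm _ _)).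
  by rewrite (lpm hc2) /P; field; rewrite ?hmu0 ?hr2 ?hsc2.
have hY0 : 0 < Y.1.1.
  rewrite /Y /vlin /= !mulr1; apply: addr_gt0 => //; exact: divr_gt0.
have hYN2 : mdot Y (Nc c2) = 0.
  by rewrite /Y mdot_vlin (lpN hc2) (lmN hc2) !mulr0 addr0.
have hYN1 : mdot Y (Nc c1) = mu * al + P / mu * be by rewrite /Y mdot_vlin.
clearbody Y.
exists (Pinv Y); rewrite Xp_Pinv //; split; first exact: Pinv_disk.
split => //.
rewrite hYN1 hN1.
have e : (mu * al + P / mu * be) ^+ 2 = (mu * al - P * be / mu) ^+ 2 + 4 * al * be * P.
  by field; rewrite ?hmu0.
rewrite e hid.
have -> : ((mu * al - P * be / mu) ^+ 2 + (K ^+ 2 - 1) * rho1 ^+ 2) / rho1 ^+ 2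
   = (mu * al - P * be / mu) ^+ 2 / rho1 ^+ 2 + K ^+ 2 - 1.
  by field; rewrite ?hr1.
have : (mu * al - P * be / mu) ^+ 2 / rho1 ^+ 2 <= d.
  by rewrite ler_pdivrMr //; apply: exprn_gt0.
lra.
Qed.



Lemma mdotXp p a x y : disk p ->
  mdot (Xp p) (a, x, y) = (- a * (1 + sqn p) + 2 * (p.1 * x + p.2 * y)) / (1 - sqn p).
Proof.
move=> /disk_pos hp; rewrite /mdot /Xp /=.
by field; apply/eqP => hh; lra.
Qed.

Lemma mdotXp_num p a x y : disk p ->
  - a * (1 + sqn p) + 2 * (p.1 * x + p.2 * y) = mdot (Xp p) (a, x, y) * (1 - sqn p).
Proof.
move=> hp; rewrite mdotXp // divfK //; have := disk_pos hp => h.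
by apply/eqP => hh; lra.
Qed.

Definition Nd (u : pt) : vec := (0, u.2, - u.1).

Lemma Nc_norm c rho : sqn c = 1 + rho ^+ 2 -> mdot (Nc c) (Nc c) = rho ^+ 2.
Proof. by rewrite /mdot /Nc /sqn /= !expr2 => h; lra. Qed.

Lemma Nd_norm (u : pt) : u != (0, 0) -> 0 < mdot (Nd u) (Nd u).
Proof.
move: u => [u1 u2] hu; rewrite /mdot /Nd /=.
have [h1|h1] := eqVneq u1 0.
  have h2 : u2 != 0 by apply: contraNneq hu => ->; rewrite h1.
  have : 0 < u2 ^+ 2 by rewrite exprn_even_gt0.
  rewrite expr2 h1; lra.
have : 0 < u1 ^+ 2 by rewrite exprn_even_gt0.
have := sqr_ge0 u2; rewrite !expr2; lra.
Qed.

Lemma circle_set (c : pt) (rho : R) : sqn c = 1 + rho ^+ 2 ->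
  [set p | disk p /\ sqdist p c = rho ^+ 2] = [set p | disk p /\ mdot (Xp p) (Nc c) = 0].
Proof.
move=> hc; apply/seteqP; split => p [hp h]; split => //.
  have e : sqdist p c = sqn p - 2 * (p.1 * c.1 + p.2 * c.2) + sqn c.
    by rewrite /sqdist /sqn; ring.
  rewrite /Nc mdotXp //.
  have -> : - 1 * (1 + sqn p) + 2 * (p.1 * c.1 + p.2 * c.2) = 0 by lra.
  by rewrite mul0r.
have := mdotXp_num 1 c.1 c.2 hp; rewrite -[(1, c.1, c.2)]/(Nc c) h mul0r => e.
rewrite /sqdist; move: e hc; rewrite /sqn => e hc; lra.
Qed.

Lemma diam_set (u : pt) :
  [set p | disk p /\ p.1 * u.2 - p.2 * u.1 = 0] = [set p | disk p /\ mdot (Xp p) (Nd u) = 0].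
Proof.
apply/seteqP; split => p [hp h]; split => //.
  rewrite /Nd mdotXp //.
  have -> : - 0 * (1 + sqn p) + 2 * (p.1 * u.2 + p.2 * - u.1) = 0 by lra.
  by rewrite mul0r.
have := mdotXp_num 0 u.2 (- u.1) hp; rewrite -[(0, u.2, - u.1)]/(Nd u) h mul0r => e.
lra.
Qed.

Lemma geod_cases (G : set pt) : geodesic G ->
  (exists u : pt, u != (0, 0) /\ G = [set p | disk p /\ mdot (Xp p) (Nd u) = 0] /\ G (0, 0))
  \/ (exists (c : pt) (rho : R), 0 < rho /\ sqn c = 1 + rho ^+ 2 /\
        G = [set p | disk p /\ sqdist p c = rho ^+ 2] /\
        G = [set p | disk p /\ mdot (Xp p) (Nc c) = 0]).
Proof.
case=> [[u [hu hG]]|[c [rho [hr [hc hG]]]]].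
  left; exists u; split => //; split; first by rewrite hG diam_set.
  rewrite hG; split; last by rewrite /=; ring.
  by rewrite /disk /sqn /=; lra.
right; exists c, rho; split => //; split => //; split => //.
by rewrite hG circle_set.
Qed.

Lemma Xp00 : Xp (0, 0) = (1, 0, 0).
Proof. rewrite /Xp /sqn /=; congr (_, _, _); rewrite ?expr0n /= ?addr0 ?subr0 ?mulr0 ?mul0r ?divr1 //. Qed.

Lemma sqrt_sqdiv (b rho : R) : 0 < rho -> Num.sqrt (b ^+ 2 / rho ^+ 2) = `|b| / rho.
Proof.
move=> hr; rewrite -expr_div_n sqrtr_sqr normf_div (gtr0_norm hr) //.
Qed.

Lemma no_second (c1 c2 u : pt) : u != (0, 0) ->
  (forall q, disk q -> `|mdot (Xp q) (Nc c1)| = `|mdot (Xp q) (Nc c2)| ->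
      q.1 * u.2 - q.2 * u.1 = 0) ->
  ((c1.1 + c2.1) / 2) ^+ 2 + ((c1.2 + c2.2) / 2) ^+ 2 <= 1.
Proof.
move=> hu H; rewrite leNgt; apply/negP => hM.
set m1 := (c1.1 + c2.1) / 2 in hM; set m2 := (c1.2 + c2.2) / 2 in hM.
set M := m1 ^+ 2 + m2 ^+ 2 in hM.
have hM0 : M != 0 by apply/eqP => hh; lra.
set al := (M + 1) / (2 * M ^+ 2).
have hal : 0 < al by apply: divr_gt0; [lra| apply: mulr_gt0; [lra| apply: exprn_gt0; lra]].
set B := (M - 1) * (3 * M + 1) / (4 * M ^+ 4).
have hB : 0 < B.
  apply: divr_gt0; first by apply: mulr_gt0; lra.
  by apply: mulr_gt0; [lra| apply: exprn_gt0; lra].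
set be := Num.sqrt B.
have hbe : 0 < be by rewrite sqrtr_gt0.
have hbe2 : be ^+ 2 = B by rewrite sqr_sqrtr //; lra.
have key : forall s : R, s ^+ 2 = 1 -> 
  let p := (al * m1 - s * be * m2, al * m2 + s * be * m1) in
  disk p /\ `|mdot (Xp p) (Nc c1)| = `|mdot (Xp p) (Nc c2)|.
  move=> s hs p.
  have sp : sqn p = 1 / M.
    transitivity ((al ^+ 2 + s ^+ 2 * be ^+ 2) * M); first by rewrite /sqn /p /M /=; ring.
    by rewrite hs mul1r hbe2 /al /B; field.
  have hp : disk p by rewrite /disk /= sp ltr_pdivrMr; lra.
  split => //.
  have hpm : p.1 * m1 + p.2 * m2 = al * M by rewrite /p /M /=; ring.
  have e1 := mdotXp_num 1 c1.1 c1.2 hp.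
  have e2 := mdotXp_num 1 c2.1 c2.2 hp.
  rewrite -/(Nc c1) in e1; rewrite -/(Nc c2) in e2.
  have hsum : (mdot (Xp p) (Nc c1) + mdot (Xp p) (Nc c2)) * (1 - sqn p) = 0.
    rewrite mulrDl -e1 -e2 sp.
    have -> : c1.1 = 2 * m1 - c2.1 by rewrite /m1; field.
    have -> : c1.2 = 2 * m2 - c2.2 by rewrite /m2; field.
    transitivity (-2 * (1 + 1 / M) + 4 * (p.1 * m1 + p.2 * m2)); first by ring.
    by rewrite hpm /al; field.
  have hd := disk_pos hp.
  move/eqP: hsum; rewrite mulf_eq0 => /orP[/eqP hs0|/eqP hh]; last by lra.
  by rewrite (_ : mdot (Xp p) (Nc c1) = - mdot (Xp p) (Nc c2)) ?normrN //; lra.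
have [hp1 hb1] := key 1 ltac:(by rewrite expr1n).
have [hp2 hb2] := key (-1) ltac:(by rewrite sqrrN expr1n).
have k1 := H _ hp1 hb1; have k2 := H _ hp2 hb2.
move: k1 k2 hu H; case: u => u1 u2 /= k1 k2 hu _.
set cr := (al * m1 - 1 * be * m2) * (al * m2 + -1 * be * m1)
          - (al * m2 + 1 * be * m1) * (al * m1 - -1 * be * m2).
have hcr : cr = - 2 * al * be * M by rewrite /cr /M; ring.
have hcr0 : cr != 0.
  rewrite hcr; apply/eqP => hh.
  have : 0 < al * be * M by apply: mulr_gt0; [apply: mulr_gt0|lra].
  lra.
have hu1 : cr * u1 = 0.
  transitivity (- ((al * m1 - 1 * be * m2) * ((al * m1 - -1 * be * m2) * u2 - (al * m2 + -1 * be * m1) * u1)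
     - (al * m1 - -1 * be * m2) * ((al * m1 - 1 * be * m2) * u2 - (al * m2 + 1 * be * m1) * u1)));
    first by rewrite /cr; ring.
  by rewrite k1 k2; ring.
have hu2 : cr * u2 = 0.
  transitivity (- ((al * m2 + 1 * be * m1) * ((al * m1 - -1 * be * m2) * u2 - (al * m2 + -1 * be * m1) * u1)
     - (al * m2 + -1 * be * m1) * ((al * m1 - 1 * be * m2) * u2 - (al * m2 + 1 * be * m1) * u1)));
    first by rewrite /cr; ring.
  by rewrite k1 k2; ring.
move/eqP: hu1; rewrite mulf_eq0 (negbTE hcr0) /= => /eqP e1.
move/eqP: hu2; rewrite mulf_eq0 (negbTE hcr0) /= => /eqP e2.
by move: hu; rewrite e1 e2 eqxx.
Qed.



Lemma disk00 : disk ((0 : R), (0 : R)).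
Proof. by rewrite /disk /sqn /= expr2 mul0r addr0 ltr01. Qed.

Lemma sinh0_diam (G : set pt) (u : pt) : u != (0, 0) ->
  G = [set p | disk p /\ mdot (Xp p) (Nd u) = 0] -> sinh (dH_pt_set (0, 0) G) = 0.
Proof.
move=> hu hG; rewrite (sinh_dist (Nd_norm hu) hG disk00) Xp00.
have -> : mdot (1, 0, 0) (Nd u) = 0 by rewrite /mdot /Nd /=; ring.
by rewrite expr2 !mul0r sqrtr0.
Qed.

Lemma sinh0_circ (G : set pt) (c : pt) (rho : R) : 0 < rho -> sqn c = 1 + rho ^+ 2 ->
  G = [set p | disk p /\ mdot (Xp p) (Nc c) = 0] -> sinh (dH_pt_set (0, 0) G) = 1 / rho.
Proof.
move=> hr hc hG.
have hN : 0 < mdot (Nc c) (Nc c) by rewrite (Nc_norm hc) exprn_gt0.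
rewrite (sinh_dist hN hG disk00) Xp00 (Nc_norm hc) sqrt_sqdiv //.
have -> : mdot (1, 0, 0) (Nc c) = -1 by rewrite /mdot /Nc /=; ring.
by rewrite normrN normr1.
Qed.

End Hyp.

Theorem lemma4p8 (R : realType) (r1 r2 : R) (g1 g2 : set (R * R)) :
  0 < r1 -> 0 < r2 ->
  geodesic g1 -> geodesic g2 -> g1 `&` g2 = set0 ->
  diameter [set q | disk q /\
              r1 * sinh (dH_pt_set q g1) = r2 * sinh (dH_pt_set q g2)] ->
  exists (c1 c2 : R * R) (rho1 rho2 : R),
    0 < rho1 /\ 0 < rho2 /\
    (g1 `<=` circle c1 rho1) /\ (g2 `<=` circle c2 rho2) /\
    rho1 * r2 = rho2 * r1 /\
    inversive_distance c1 rho1 c2 rho2 = cosh (dH_set g1 g2).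
Proof.
move=> hr1 hr2 hg1 hg2 hdis [u [hu hS]].
have eqS : forall q : R * R,
    (disk q /\ r1 * sinh (dH_pt_set q g1) = r2 * sinh (dH_pt_set q g2)) =
    (disk q /\ q.1 * u.2 - q.2 * u.1 = 0).
  by move=> q; exact: (congr1 (fun A => A q) hS).
have onS : forall q : R * R, disk q ->
    r1 * sinh (dH_pt_set q g1) = r2 * sinh (dH_pt_set q g2) -> q.1 * u.2 - q.2 * u.1 = 0.
  move=> q hq hF; have : disk q /\ q.1 * u.2 - q.2 * u.1 = 0 by rewrite -eqS.
  by case.
have F0 : r1 * sinh (dH_pt_set (0, 0) g1) = r2 * sinh (dH_pt_set (0, 0) g2).
  have : disk ((0 : R), (0 : R)) /\ (0 : R) * u.2 - (0 : R) * u.1 = 0.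
    by split; [exact: disk00 | rewrite /=; ring].
  by rewrite -eqS => -[].
case: (geod_cases hg1) => [[u1 [hu1 [hG1 h01]]]|[c1 [rho1 [hrho1 [hc1 [hC1 hN1]]]]]];
case: (geod_cases hg2) => [[u2 [hu2 [hG2 h02]]]|[c2 [rho2 [hrho2 [hc2 [hC2 hN2]]]]]].
- exfalso; have : (g1 `&` g2) (0, 0) by split.
  by rewrite hdis.
- exfalso; move: F0; rewrite (sinh0_diam hu1 hG1) (sinh0_circ hrho2 hc2 hN2) mulr0 => h.
  have : 0 < r2 * (1 / rho2) by apply: mulr_gt0 => //; apply: divr_gt0.
  lra.
- exfalso; move: F0; rewrite (sinh0_diam hu2 hG2) (sinh0_circ hrho1 hc1 hN1) mulr0 => h.
  have : 0 < r1 * (1 / rho1) by apply: mulr_gt0 => //; apply: divr_gt0.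
  lra.
move: F0; rewrite (sinh0_circ hrho1 hc1 hN1) (sinh0_circ hrho2 hc2 hN2) => F0.
have hn1 : 0 < mdot (Nc c1) (Nc c1) by rewrite (Nc_norm hc1) exprn_gt0.
have hn2 : 0 < mdot (Nc c2) (Nc c2) by rewrite (Nc_norm hc2) exprn_gt0.
have hr1' : rho1 != 0 by apply/eqP => hh; lra.
have hr2' : rho2 != 0 by apply/eqP => hh; lra.
have hratio : rho1 * r2 = rho2 * r1.
  have e1 : rho2 * r1 = r1 * (1 / rho1) * (rho1 * rho2) by field.
  have e2 : rho1 * r2 = r2 * (1 / rho2) * (rho1 * rho2) by field.
  by rewrite e1 e2 F0.
have hsum := no_second (c1 := c1) (c2 := c2) hu.
have {hsum} hsum : ((c1.1 + c2.1) / 2) ^+ 2 + ((c1.2 + c2.2) / 2) ^+ 2 <= 1.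
  apply: hsum => q hq hb; apply: onS => //.
  rewrite (sinh_dist hn1 hN1 hq) (sinh_dist hn2 hN2 hq) (Nc_norm hc1) (Nc_norm hc2).
  rewrite !sqrt_sqdiv // hb.
  have -> : r1 * (`|mdot (Xp q) (Nc c2)| / rho1) = r1 * (1 / rho1) * `|mdot (Xp q) (Nc c2)|.
    by ring.
  rewrite F0; ring.
set t := c1.1 * c2.1 + c1.2 * c2.2.
set K := (1 - t) / (rho1 * rho2).
have hK1 : 1 <= K.
  rewrite /K ler_pdivlMr ?mul1r; last exact: mulr_gt0.
  move: hc1 hc2 hsum; rewrite /sqn /t => hc1 hc2 hsum.
  have := sqr_ge0 (rho1 - rho2).
  rewrite !expr2 in hc1 hc2 hsum *; nra.
exists c1, c2, rho1, rho2.
split => //; split => //; split.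
  by move=> p; rewrite hC1 => -[_ h].
split; first by move=> p; rewrite hC2 => -[_ h].
split => //.
have hKN : K ^+ 2 * (mdot (Nc c1) (Nc c1) * mdot (Nc c2) (Nc c2)) = mdot (Nc c1) (Nc c2) ^+ 2.
  rewrite (Nc_norm hc1) (Nc_norm hc2) /K.
  have -> : mdot (Nc c1) (Nc c2) = -1 + t by rewrite /mdot /Nc /t /=; ring.
  by field; rewrite hr1' hr2'.
rewrite (dset_arcosh hn1 hn2 hN1 hN2 hK1 hKN); last first.
  by move=> d hd; apply: (approx hrho1 hrho2 hc1 hc2 (erefl K) hK1 hd).
rewrite cosh_arcosh //.
rewrite /inversive_distance.
have -> : sqdist c1 c2 = sqn c1 + sqn c2 - 2 * t by rewrite /sqdist /sqn /t; ring.
by rewrite hc1 hc2 /K; field; rewrite hr1' hr2'.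
Qed.
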